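(* Let $p$ be a prime. Every group of order $p$, $p^2$ or $p^3$ has the property that each of its non-abelian subgroups $H$ satisfies $C_G(H)\le H$. A group $G$ of order $p^4$ has this property if and only if $G$ is abelian, or $G$ has maximal class (nilpotency class $3$), or $\Phi(G)=Z(G)$.
   Context: $C_G(H)$ denotes the centralizer of $H$ in $G$, $\Phi(G)$ the Frattini subgroup and $Z(G)$ the center. *)

(* Defs.v *)
From mathcomp Require Import all_boot all_fingroup all_solvable.
Set Implicit Arguments. Unset Strict Implicit. Unset Printing Implicit Defensive.
Local Open Scope group_scope.

Definition nonab_selfcent (gT : finGroupType) (G : {group gT}) : Prop :=
  forall H : {group gT}, H \subset G -> ~~ abelian H -> 'C_G(H) \subset H.

(* Main.v *)
Require Import Defs.
From mathcomp Require Import all_boot all_fingroup all_solvable.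
From mathcomp Require Import zify.
Set Implicit Arguments. Unset Strict Implicit. Unset Printing Implicit Defensive.
Local Open Scope group_scope.
Lemma cent_max (gT : finGroupType) (G H : {group gT}) :
  H <| G -> maximal H G -> 'Z(G) \subset H -> 'C_G(H) \subset H.
Proof.
move=> nHG maxH sZH; apply/subsetP=> x /setIP[xG cHx].
apply/negPn/negP=> xH.
have sxG : <[x]> \subset G by rewrite cycle_subG.
have nsxH : ~~ (<[x]> \subset H) by rewrite cycle_subG.
have defG := mulg_normal_maximal nHG maxH sxG nsxH.
move/negP: xH; apply; apply: (subsetP sZH); rewrite inE xG -defG centM inE cHx.
by rewrite cent_cycle cent1id.
Qed.

Lemma max_Zout (gT : finGroupType) (G H : {group gT}) :
  H <| G -> maximal H G -> ~~ ('Z(G) \subset H) ->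
  H \* 'Z(G) = G.
Proof.
move=> nHG maxH nZH.
rewrite cprodE; last exact: subset_trans (subsetIr G 'C(G)) (centS (normal_sub nHG)).
exact: mulg_normal_maximal nHG maxH (center_sub G) nZH.
Qed.

Lemma max_Zout_der (gT : finGroupType) (G H : {group gT}) :
  H <| G -> maximal H G -> ~~ ('Z(G) \subset H) ->
  G^`(1) = H^`(1).
Proof.
move=> nHG maxH nZH.
have := der_cprod 1 (max_Zout nHG maxH nZH).
case/cprodP=> _ <- _.
have /derG1P -> : abelian 'Z(G) by apply: center_abelian.
by rewrite mulg1.
Qed.

Lemma max_Zout_center (gT : finGroupType) (G H : {group gT}) :
  H <| G -> maximal H G -> ~~ ('Z(G) \subset H) ->
  'Z(H) \subset 'Z(G).
Proof.
move=> nHG maxH nZH.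
have := center_cprod (max_Zout nHG maxH nZH).
by case/cprodP=> _ <- _; apply: mulG_subl.
Qed.
Lemma pgroup_card (gT : finGroupType) (G : {group gT}) p k :
  prime p -> #|G| = (p ^ k)%N -> p.-group G /\ logn p #|G| = k.
Proof. by move=> pp cG; rewrite /pgroup cG pnatX pnat_id // pfactorK. Qed.

Lemma nonab_big (gT : finGroupType) (G H : {group gT}) (p : nat) :
  p.-group G -> H \subset G -> ~~ abelian H -> 2 < logn p #|H|.
Proof.
move=> pG sHG nab; rewrite ltnNge; apply: contra nab.
exact: p2group_abelian (pgroupS sHG pG).
Qed.

Lemma nonab_sub3 (gT : finGroupType) (G H : {group gT}) (p : nat) :
  prime p -> p.-group G -> logn p #|G| <= 3 -> H \subset G -> ~~ abelian H -> H :=: G.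
Proof.
move=> pp pG lG sHG nab.
have lH := nonab_big pG sHG nab.
apply/eqP; rewrite eqEcard sHG /= (card_pgroup pG) (card_pgroup (pgroupS sHG pG)).
rewrite leq_exp2l ?prime_gt1 //; exact: leq_trans lG lH.
Qed.

Lemma nonab_sub4 (gT : finGroupType) (G H : {group gT}) (p : nat) :
  prime p -> #|G| = (p ^ 4)%N -> H \subset G -> ~~ abelian H ->
  H :=: G \/ maximal H G.
Proof.
move=> pp cG sHG nab; have [pG lG] := pgroup_card pp cG.
have pH := pgroupS sHG pG.
have lH := nonab_big pG sHG nab.
have lHG : logn p #|H| <= 4.
  by rewrite -lG dvdn_leq_log ?cardG_gt0 ?cardSg.
have : logn p #|H| = 3 \/ logn p #|H| = 4 by lia.
case=> eH.
  right; apply: p_index_maximal => //.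
  have := Lagrange sHG; rewrite cG (card_pgroup pH) eH => E.
  have -> : #|G : H| = p.
    have p3 : 0 < p ^ 3 by rewrite expn_gt0 prime_gt0.
    apply/eqP; rewrite -(eqn_pmul2l p3).
    by rewrite E -expnSr.
  done.
left; apply/eqP; rewrite eqEcard sHG /= cG (card_pgroup pH) eH.
done.
Qed.

Lemma small_index_cyclic (gT : finGroupType) (G N : {group gT}) (p : nat) :
  prime p -> p.-group G -> N <| G -> logn p #|G| <= (logn p #|N|).+1 ->
  cyclic (G / N).
Proof.
move=> pp pG nNG le.
have pQ : p.-group (G / N) := quotient_pgroup N pG.
have cQ := card_quotient (normal_norm nNG).
have L := Lagrange (normal_sub nNG).
have : logn p #|G| = logn p #|N| + logn p #|G / N|.
  by rewrite -L cQ lognM ?cardG_gt0 ?indexg_gt0.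
move=> E.
have : logn p #|G / N| = 0%N \/ logn p #|G / N| = 1%N by lia.
case=> e.
  have : (G / N) :==: 1 by rewrite trivg_card1 (card_pgroup pQ) e.
  by move/eqP => ->; apply: cyclic1.
by apply: prime_cyclic; rewrite (card_pgroup pQ) e expn1.
Qed.

Unset Implicit Arguments.

Theorem lemma6p9 (gT : finGroupType) (G : {group gT}) (p : nat) (hp : prime p) :
  ((#|G| = p \/ #|G| = (p ^ 2)%N \/ #|G| = (p ^ 3)%N) -> nonab_selfcent G) /\
  (#|G| = (p ^ 4)%N ->
     (nonab_selfcent G <->
        [\/ abelian G, nil_class G = 3 | 'Phi(G) = 'Z(G)])).
Proof.
split.
  move=> hc H sHG nab.
  have [pG lG] : p.-group G /\ logn p #|G| <= 3.
    case: hc => [c|[c|c]].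
    - have c' : #|G| = (p ^ 1)%N by rewrite expn1.
      by have [? ->] := pgroup_card hp c'.
    - by have [? ->] := pgroup_card hp c.
    - by have [? ->] := pgroup_card hp c.
  by rewrite (nonab_sub3 hp pG lG sHG nab); apply: subsetIl.
move=> cG; have [pG lG] := pgroup_card hp cG.
split.
  move=> P.
  case: (boolP (abelian G)) => [ab|nab]; first by apply: Or31.
  have cl3 : nil_class G <= 3 by have := nil_class_pgroup pG; rewrite lG.
  case: (nil_class G =P 3) => [e|ne]; first by apply: Or32.
  apply: Or33.
  have cl2 : nil_class G <= 2 by lia.
  have sG'Z : G^`(1) \subset 'Z(G) by rewrite -nil_class2.
  have key : forall M : {group gT}, maximal M G -> 'Z(G) \subset M.
    move=> M maxM; apply/negPn/negP => nZM.
    have nMG := p_maximal_normal pG maxM.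
    have nabM : ~~ abelian M.
      apply: contra nab => abM; apply/derG1P.
      by rewrite (max_Zout_der nMG maxM nZM); apply/derG1P.
    have := P M (proper_sub (maxgroupp maxM)) nabM.
    move=> sCM; case/negP: nZM; apply: subset_trans sCM.
    rewrite subsetI center_sub /=.
    exact: subset_trans (subsetIr G 'C(G)) (centS (proper_sub (maxgroupp maxM))).
  have sZPhi : 'Z(G) \subset 'Phi(G).
    apply/bigcapsP => M; rewrite /maximal_eq => /orP [/eqP -> | maxM].
      exact: center_sub.
    exact: key.
  have pZ : p.-group 'Z(G) := pgroupS (center_sub G) pG.
  have pPhi : p.-group 'Phi(G) := pgroupS (Phi_sub G) pG.
  have zle : logn p #|'Z(G)| <= logn p #|'Phi(G)|.
    by rewrite dvdn_leq_log ?cardG_gt0 ?cardSg.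
  have z1 : 0 < logn p #|'Z(G)|.
    rewrite lt0n; apply/negP => /eqP z0.
    have : 'Z(G) :==: 1 by rewrite trivg_card1 (card_pgroup pZ) z0.
    rewrite (center_nil_eq1 (pgroup_nil pG)) trivg_card1 cG.
    by move/eqP/(f_equal (logn p)); rewrite pfactorK // logn1.
  have z2 : logn p #|'Z(G)| <= 2.
    rewrite leqNgt; apply/negP => z3.
    case/negP: (nab); apply: cyclic_center_factor_abelian.
    by apply: (small_index_cyclic hp pG (center_normal G)); rewrite lG ltnS.
  have f2 : logn p #|'Phi(G)| <= 2.
    rewrite leqNgt; apply/negP => f3.
    case/negP: (nab); apply: cyclic_abelian; apply: Phi_quotient_cyclic.
    by apply: (small_index_cyclic hp pG (Phi_normal G)); rewrite lG ltnS.
  have : logn p #|'Z(G)| = 2 \/ logn p #|'Z(G)| = 1%N by lia.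
  case=> ez.
    apply/esym/eqP; rewrite eqEcard sZPhi /=.
    rewrite (card_pgroup pZ) (card_pgroup pPhi) leq_exp2l ?prime_gt1 // // ez; exact: f2.
  apply/eqP; rewrite eqEsubset sZPhi andbT (Phi_joing pG) join_subG sG'Z /=.
  rewrite (MhoE 1 pG) gen_subG; apply/subsetP => _ /imsetP[x xG ->].
  rewrite expn1 inE groupX //=; apply/centP => y yG.
  have cG'Z : [~ x, y] \in 'Z(G).
    by apply: (subsetP sG'Z); rewrite derg1 mem_commg.
  have cxc : commute x [~ x, y].
    by move/setIP: cG'Z => [_ /centP c]; apply: esym; apply: c.
  apply/commgP; rewrite (commXg p cxc).
  by have := expg_cardG cG'Z; rewrite (card_pgroup pZ) ez expn1 => ->.
case=> [ab | c3 | ePZ] H sHG nab.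
- by case/negP: (nab); apply: abelianS sHG ab.
- case: (nonab_sub4 hp cG sHG nab) => [eH | maxH].
    by rewrite eH; apply: subsetIl.
  have nHG := p_maximal_normal pG maxH.
  apply: (cent_max nHG maxH).
  apply/negPn/negP => nZH.
  have : nil_class G <= 2.
    rewrite nil_class2 (max_Zout_der nHG maxH nZH).
    apply: subset_trans (max_Zout_center nHG maxH nZH).
    rewrite -nil_class2.
    have pH := pgroupS sHG pG.
    have lH : logn p #|H| < 4.
      have := proper_card (maxgroupp maxH).
      by rewrite cG {1}(card_pgroup pH) ltn_exp2l ?prime_gt1.
    have := nil_class_pgroup pH; lia.
  by rewrite c3.
- case: (nonab_sub4 hp cG sHG nab) => [eH | maxH].
    by rewrite eH; apply: subsetIl.
  have nHG := p_maximal_normal pG maxH.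
  apply: (cent_max nHG maxH).
  by rewrite -ePZ; apply: Phi_sub_max.
Qed.
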